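(* Let $G_1$ and $G_2$ be two vertex-disjoint 2-edge-colored graphs with Hamiltonian alternating cycles $C_1=x_0x_1\cdots x_{2n-1}x_0$ and $C_2=y_0y_1\cdots y_{2m-1}y_0$, respectively, and let $G\in G_1\oplus G_2$. Suppose there is no good pair in $G$ (between $C_1$ and $C_2$), and that for each $i\in\{1,2\}$ there is a vertex of $C_i$ which is non-singular with respect to $C_{3-i}$. Then there exist $r\in[0,2m-1]$ and $s\in[0,2n-1]$ such that $x_0y_ry_{r+1}y_{r+2}x_0$ and $y_0x_sx_{s+1}x_{s+2}y_0$ are alternating 4-cycles (subscripts of $x$ taken modulo $2n$, of $y$ modulo $2m$).
   Context: All graphs are simple, with edges colored red or blue. An alternating cycle is a cycle in which consecutive edges have different colors; a Hamiltonian alternating cycle of a graph is an alternating cycle through all its vertices. For vertex-disjoint 2-edge-colored graphs $G_1,G_2$, the colored generalized sum $G_1\oplus G_2$ is the set of 2-edge-colored graphs $G$ with $V(G)=V(G_1)\cup V(G_2)$, $G\langle V(G_i)\rangle=G_i$ with the same coloring, and exactly one edge (of arbitrary fixed color) between each $u\in V(G_1)$ and $w\in V(G_2)$; these latter edges are the exterior edges. For $v$ on an alternating cycle $C$, $v^r$ (resp. $v^b$) is the neighbor of $v$ on $C$ with $vv^r$ red (resp. $vv^b$ blue). For an exterior edge $vw$ with $v\in V(C_1)$, $w\in V(C_2)$: if $vw$ is red, $vw,v^rw^r$ is a good pair if $v^rw^r$ is red; if $vw$ is blue, $vw,v^bw^b$ is a good pair if $v^bw^b$ is blue. A vertex $v\in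 V(C_i)$ is red-singular (blue-singular) with respect to $C_{3-i}$ if all edges between $v$ and $V(C_{3-i})$ are red (blue); it is singular if red- or blue-singular, and non-singular otherwise (i.e. it is incident with exterior edges of both colors towards $C_{3-i}$). *)

(* Defs.v *)
From mathcomp Require Import all_boot.
Set Implicit Arguments. Unset Strict Implicit. Unset Printing Implicit Defensive.

(* A 2-edge-colored simple graph on a finite vertex type T is given by a
   symmetric irreflexive adjacency relation [adj] and a colouring [col]
   (col u v = true means the edge uv is red, false means blue); [col] is
   only meaningful on edges and is assumed symmetric. *)

(* [f : nat -> T] read modulo k describes the closed walk
   f 0, f 1, ..., f (k-1), f 0.  It is an alternating cycle when it has at
   least 3 distinct vertices, consecutive vertices are adjacent, and
   consecutive edges (cyclically) have different colours. *)
Definition is_alt_cycle (T : eqType) (adj : rel T) (col : T -> T -> bool)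
    (k : nat) (f : nat -> T) : Prop :=
  [/\ 3 <= k,
      (forall i j, i < k -> j < k -> f i = f j -> i = j),
      (forall i, adj (f (i %% k)) (f (i.+1 %% k))) &
      (forall i, col (f (i %% k)) (f (i.+1 %% k))
                 != col (f (i.+1 %% k)) (f (i.+2 %% k)))].

(* For the vertex v = f i on the alternating cycle f (of length k) and a
   colour c, [cnbr col k f i c] is v^c: the neighbour u of v on the cycle
   such that the cycle edge vu has colour c (successor or predecessor). *)
Definition cnbr (T : Type) (col : T -> T -> bool) (k : nat) (f : nat -> T)
    (i : nat) (c : bool) : T :=
  if col (f (i %% k)) (f (i.+1 %% k)) == c then f (i.+1 %% k)
  else f ((i + k).-1 %% k).

(* Good pair: for v = x i on C1 and w = y j on C2, the exterior edge vw of
   colour c together with v^c w^c forms a good pair iff v^c w^c has colour c. *)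
Definition good_pair (T : Type) (col : T -> T -> bool)
    (n2 : nat) (x : nat -> T) (m2 : nat) (y : nat -> T) (i j : nat) : bool :=
  let c := col (x i) (y j) in
  col (cnbr col n2 x i c) (cnbr col m2 y j c) == c.

Definition nonsingular (T : finType) (col : T -> T -> bool) (v : T)
    (W : {set T}) : Prop :=
  (exists2 w, w \in W & col v w) /\ (exists2 w, w \in W & ~~ col v w).

(* Main.v *)
Require Import Defs.
From mathcomp Require Import all_boot zify.
From Stdlib Require Import Classical.
Set Implicit Arguments. Unset Strict Implicit. Unset Printing Implicit Defensive.

Section Core.
Variables (N M : nat) (E : nat -> nat -> bool) (A B : nat -> bool).
Hypotheses (hN : 0 < N) (hNe : ~~ odd N) (hM : 0 < M) (hMe : ~~ odd M).
Hypothesis hE : forall i j, E i j = E (i %% N) (j %% M).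
Hypothesis hA : forall i, A i.+1 = ~~ A i.
Hypothesis hB : forall i, B i.+1 = ~~ B i.
Hypothesis hG : forall i j,
  E (if A i == E i j then i.+1 else i + N.-1)
    (if B j == E i j then j.+1 else j + M.-1) = ~~ E i j.

Lemma eqNN (a b : bool) : (~~ a == ~~ b) = (a == b).
Proof. by case: a; case: b. Qed.

Lemma oddb (b : bool) : odd b = b.
Proof. by case: b. Qed.

Lemma sqpred (K : nat) : 2 <= K -> K.-1 * K.-1 = (K-2)*K + 1.
Proof. nia. Qed.

Lemma oddpred K : 0 < K -> ~~ odd K -> odd K.-1.
Proof. by case: K => // K _; rewrite /= negbK. Qed.

Lemma Aodd i k : A (i + k) = A i (+) odd k.
Proof.
elim: k => [|k IH]; first by rewrite addn0 addbF.
by rewrite addnS hA IH /= addbN.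
Qed.

Lemma Bodd i k : B (i + k) = B i (+) odd k.
Proof.
elim: k => [|k IH]; first by rewrite addn0 addbF.
by rewrite addnS hB IH /= addbN.
Qed.

Lemma B0 k : B k = B 0 (+) odd k.
Proof. by rewrite -Bodd. Qed.

Lemma orbit t : forall i j,
  E (i + t * (if A i == E i j then 1 else N.-1))
    (j + t * (if B j == E i j then 1 else M.-1)) = E i j (+) odd t.
Proof.
elim: t => [|t IH] i j.
  by rewrite !mul0n !addn0 addbF.
set c := E i j.
set sa := (if A i == c then 1 else N.-1).
set sb := (if B j == c then 1 else M.-1).
have osa : odd sa by rewrite /sa; case: ifP => // _; exact: oddpred.
have osb : odd sb by rewrite /sb; case: ifP => // _; exact: oddpred.
have Ei : E (i + sa) (j + sb) = ~~ c.
  have := hG i j; rewrite -/c /sa /sb.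
  by case: (A i == c); case: (B j == c); rewrite ?addn1.
have Ai : A (i + sa) = ~~ A i by rewrite Aodd osa addbT.
have Bj : B (j + sb) = ~~ B j by rewrite Bodd osb addbT.
have := IH (i + sa) (j + sb).
rewrite Ei Ai Bj.
rewrite !eqNN.
rewrite -/sa -/sb -!addnA -!mulSn => ->.
by rewrite /= addbN addNb.
Qed.

Hypothesis H0 : forall k, E 0 k = E 0 (odd k).

Lemma formula i j : E i j = E 0 (odd (i + j)) (+) odd i.
Proof.
set p := odd (i + j).
set c := E 0 p.
set sa := (if A 0 == c then 1 else N.-1).
set sb := (if B p == c then 1 else M.-1).
have osa : odd sa by rewrite /sa; case: ifP => // _; exact: oddpred.
have osb : odd sb by rewrite /sb; case: ifP => // _; exact: oddpred.
have oM1 : odd M.-1 by exact: oddpred.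
set t := i * sa.
set k := j + t * sb * M.-1.
have ot : odd t = odd i by rewrite /t oddM osa andbT.
have ok : odd k = p by rewrite /k /p !oddD !oddM osa osb oM1 !andbT addbC.
have Ek : E 0 k = c by rewrite H0 ok.
have Bk : B k = B p by rewrite B0 [B p]B0 ok oddb.
have := orbit t 0 k.
rewrite Ek Bk -/sa -/sb add0n ot => <-.
rewrite hE [E (t * sa) _]hE; congr E.
  rewrite /t -mulnA.
  rewrite /sa; case: ifP => _; first by rewrite !muln1.
  have N2 : 2 <= N by move: hN hNe; case: N => [|[|]].
  rewrite sqpred //.
  by rewrite mulnDr muln1 mulnA modnMDl.
have -> : k + t * sb = t * sb * M + j.
  rewrite /k -addnA addnC; congr (_ + _).
  by rewrite -mulnSr prednK.
by rewrite modnMDl.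
Qed.

End Core.

Lemma arith1 r M : 0 < M -> r.+2 + 2 * M.-1 = 2 * M + r.
Proof. lia. Qed.

Section Core2.
Variables (N M : nat) (E : nat -> nat -> bool) (A B : nat -> bool).
Hypotheses (hN : 0 < N) (hNe : ~~ odd N) (hM : 0 < M) (hMe : ~~ odd M).
Hypothesis hE : forall i j, E i j = E (i %% N) (j %% M).
Hypothesis hA : forall i, A i.+1 = ~~ A i.
Hypothesis hB : forall i, B i.+1 = ~~ B i.
Hypothesis hG : forall i j,
  E (if A i == E i j then i.+1 else i + N.-1)
    (if B j == E i j then j.+1 else j + M.-1) = ~~ E i j.

Lemma core :
  (exists i j1 j2, E i j1 != E i j2) ->
  (exists j i1 i2, E i1 j != E i2 j) ->
  exists r, [/\ r < M, E 0 r = ~~ B r & E 0 r.+2 = B r].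
Proof.
move=> [i [j1 [j2 Hrow]]] [j [i1 [i2 Hcol]]].
have E0 : forall r, E 0 r = E 0 (r %% M) by move=> r; rewrite hE mod0n.
have Bm : forall r, B r = B (r %% M).
  by move=> r; rewrite (B0 hB r) (B0 hB (r %% M)) odd_mod //; apply/negbTE.
case: (classic (exists r, E 0 r = ~~ B r /\ E 0 r.+2 = B r)) => [[r [h1 h2]]|hno].
  exists (r %% M); split; first exact: ltn_pmod.
    by rewrite -E0 -Bm.
  rewrite -Bm -h2 E0 [E 0 r.+2]E0; congr (E 0 _).
  by rewrite -addn2 modnDml addn2.
exfalso.
set D := fun r => E 0 r == B r.
have Dm : forall r, D r = D (r %% M) by move=> r; rewrite /D -E0 -Bm.
have step : forall r, ~~ D r -> ~~ D r.+2.
  move=> r; rewrite /D => h; apply/negP => /eqP h2.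
  apply: hno; exists r; split.
    by move: h; case: (E 0 r); case: (B r).
  by rewrite h2 !hB negbK.
have iter : forall k r, ~~ D r -> ~~ D (r + 2 * k).
  elim=> [|k IH] r h; first by rewrite muln0 addn0.
  by rewrite mulnS addnA; apply: IH; rewrite addn2; apply: step.
have D2 : forall r, D r.+2 = D r.
  move=> r; apply/idP/idP => h.
    apply/negPn/negP => hh.
    by move: (step _ hh); rewrite h.
  apply/negPn/negP => hh.
  have := iter M.-1 _ hh.
  rewrite arith1 //.
  by rewrite Dm modnMDl -Dm h.
have Dodd : forall r, D r = D (odd r).
  move=> r; elim: r {-2}r (leqnn r) => [|n IH] r hr.
    by move: hr; rewrite leqn0 => /eqP ->.
  case: r hr => [|[|r]] hr //.
  by rewrite D2 IH /= ?negbK // -ltnS ltnW.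
have H0 : forall k, E 0 k = E 0 (odd k).
  move=> k; have := Dodd k; rewrite /D (B0 hB k) [B (odd k)](B0 hB) oddb.
  by case: (E 0 k); case: (E 0 (odd k)); case: (B 0 (+) odd k).
have F := formula hN hNe hM hMe hE hA hB hG H0.
move: Hrow Hcol; rewrite (F i j1) (F i j2) (F i1 j) (F i2 j) !oddD.
have G : forall b : bool, E 0 b = if b then E 0 1 else E 0 0 by case.
rewrite !G.
by case: (odd i); case: (odd j1); case: (odd j2); case: (odd i1); case: (odd i2);
  case: (odd j); case: (E 0 1); case: (E 0 0).
Qed.
End Core2.

Lemma neqb (a b : bool) : a != b -> b = ~~ a.
Proof. by case: a; case: b. Qed.

Lemma predmod (N i : nat) : 0 < N -> ((i %% N) + N).-1 %% N = (i + N.-1) %% N.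
Proof. by move=> hN; rewrite -{2}(prednK hN) addnS /= modnDml. Qed.

Lemma modS1 (N i : nat) : (i %% N).+1 %% N = i.+1 %% N.
Proof. by rewrite -addn1 modnDml addn1. Qed.

Lemma dist3 (r M : nat) : r < M -> 4 <= M ->
  [/\ r <> r.+1 %% M, r <> r.+2 %% M & r.+1 %% M <> r.+2 %% M].
Proof.
move=> h1 h2; case: (ltngtP r.+2 M) => h.
- rewrite !modn_small //; last exact: ltnW.
  split; lia.
- have e : M = r.+1 by lia.
  rewrite e modnn -[r.+2]add1n modnDr modn_small; last by rewrite e in h2; lia.
  split; lia.
- rewrite -h modnn modn_small //; split; lia.
Qed.

Lemma four m : 2 < 2 * m -> 4 <= 2 * m.
Proof. lia. Qed.

Lemma mod4_cases (P : nat -> nat -> nat -> Prop) :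
  P 0 1 2 -> P 1 2 3 -> P 2 3 0 -> P 3 0 1 ->
  forall i, P (i %% 4) (i.+1 %% 4) (i.+2 %% 4).
Proof.
move=> h0 h1 h2 h3 i.
rewrite -[i.+2]addn2 -[i.+1]addn1 -(modnDml i 1) -(modnDml i 2).
have : i %% 4 < 4 by rewrite ltn_mod.
by case: (i %% 4) => [|[|[|[|k]]]].
Qed.

Lemma half (T : finType) (adj : rel T) (col : T -> T -> bool)
    (n m : nat) (x y : nat -> T) :
  symmetric adj -> (forall u v, col u v = col v u) ->
  is_alt_cycle adj col (2 * n) x ->
  is_alt_cycle adj col (2 * m) y ->
  [disjoint [set x (val i) | i : 'I_(2 * n)] & [set y (val j) | j : 'I_(2 * m)]] ->
  (forall u w, u \in [set x (val i) | i : 'I_(2 * n)] ->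
     w \in [set y (val j) | j : 'I_(2 * m)] -> adj u w) ->
  (forall i j, i < 2 * n -> j < 2 * m -> ~~ good_pair col (2 * n) x (2 * m) y i j) ->
  (exists2 i, i < 2 * n & nonsingular col (x i) [set y (val j) | j : 'I_(2 * m)]) ->
  (exists2 j, j < 2 * m & nonsingular col (y j) [set x (val i) | i : 'I_(2 * n)]) ->
  exists r, r < 2 * m /\
    is_alt_cycle adj col 4
      (fun k => nth (x 0) [:: x 0; y r; y (r.+1 %% (2 * m)); y (r.+2 %% (2 * m))] k).
Proof.
move=> hsym hcol hx hy disj hext hng [i0 hi0 [[w1 hw1 c1] [w2 hw2 c2]]]
  [j0 hj0 [[u1 hu1 d1] [u2 hu2 d2]]].
case: hx => hx3 hxinj hxadj hxalt; case: hy => hy3 hyinj hyadj hyalt.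
set N := 2 * n in hx3 hxinj hxadj hxalt hext hng hi0 hu1 hu2 disj *.
set M := 2 * m in hy3 hyinj hyadj hyalt hext hng hj0 hw1 hw2 disj *.
have hN : 0 < N by apply: leq_trans hx3.
have hM : 0 < M by apply: leq_trans hy3.
have hNe : ~~ odd N by rewrite /N oddM.
have hMe : ~~ odd M by rewrite /M oddM.
pose E i j := col (x (i %% N)) (y (j %% M)).
pose A i := col (x (i %% N)) (x (i.+1 %% N)).
pose B j := col (y (j %% M)) (y (j.+1 %% M)).
have hE : forall i j, E i j = E (i %% N) (j %% M) by move=> i j; rewrite /E !modn_mod.
have hA : forall i, A i.+1 = ~~ A i by move=> i; apply: neqb; exact: hxalt.
have hB : forall i, B i.+1 = ~~ B i by move=> i; apply: neqb; exact: hyalt.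
have hG : forall i j,
  E (if A i == E i j then i.+1 else i + N.-1)
    (if B j == E i j then j.+1 else j + M.-1) = ~~ E i j.
  move=> i j.
  have := hng (i %% N) (j %% M) (ltn_pmod _ hN) (ltn_pmod _ hM).
  rewrite /good_pair /cnbr !modn_mod !modS1 (predmod _ hN) (predmod _ hM).
  rewrite -/(A i) -/(B j) -/(E i j).
  case: (A i == E i j); case: (B j == E i j); rewrite /E ?modn_mod;
    by case: (col _ _); case: (col _ (y (j %% M))).
have hrow : exists i j1 j2, E i j1 != E i j2.
  move: c1 c2; case/imsetP: hw1 => k1 _ ->; case/imsetP: hw2 => k2 _ -> c1 c2.
  exists i0, k1, k2; rewrite /E !modn_small //; move: c1 c2.
  by case: (col _ (y k1)); case: (col _ (y k2)).
have hcolm : exists j i1 i2, E i1 j != E i2 j.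
  move: d1 d2; case/imsetP: hu1 => l1 _ ->; case/imsetP: hu2 => l2 _ -> d1 d2.
  exists j0, l1, l2; rewrite /E !modn_small // -!(hcol (y j0)); move: d1 d2.
  by case: (col _ (x l1)); case: (col _ (x l2)).
have [r [hr e0 e2]] := core hN hNe hM hMe hE hA hB hG hrow hcolm.
move: e0 e2; rewrite /E /B !mod0n (modn_small hr) => e0 e2.
exists r; split => //.
have M4 : 4 <= M by exact: four.
set r1 := r.+1 %% M; set r2 := r.+2 %% M.
have hr1 : r1 < M by exact: ltn_pmod.
have hr2 : r2 < M by exact: ltn_pmod.
have [d01 d02 d12] := dist3 hr M4.
have x0V1 : x 0 \in [set x (\val i) | i : 'I_N] by apply/imsetP; exists (Ordinal hN).
have yV2 : forall k, k < M -> y k \in [set y (\val j) | j : 'I_M].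
  by move=> k hk; apply/imsetP; exists (Ordinal hk).
have X : forall k, k < M -> x 0 != y k.
  move=> k hk; apply/eqP => h.
  by have := disjointFr disj x0V1; rewrite h yV2.
have Y : forall a b, a < M -> b < M -> a <> b -> y a != y b.
  by move=> a b ha hb hab; apply/eqP => /(hyinj _ _ ha hb).
have alt := hyalt r; rewrite (modn_small hr) -/r1 -/r2 in alt.
have ad1 := hyadj r; rewrite (modn_small hr) -/r1 in ad1.
have ad2 := hyadj r.+1; rewrite -/r1 -/r2 in ad2.
split => //.
- move=> a b ha hb /eqP; rewrite nth_uniq //; first by move/eqP.
  rewrite /= !inE !negb_or !X // !Y //.
- apply: (@mod4_cases (fun a b _ => adj (nth (x 0) [:: x 0; y r; y r1; y r2] a)
                                     (nth (x 0) [:: x 0; y r; y r1; y r2] b))) => /=.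
  + exact: hext x0V1 (yV2 _ hr).
  + exact: ad1.
  + exact: ad2.
  + by rewrite hsym; apply: hext x0V1 (yV2 _ hr2).
- apply: (@mod4_cases (fun a b c => col (nth (x 0) [:: x 0; y r; y r1; y r2] a)
                                     (nth (x 0) [:: x 0; y r; y r1; y r2] b) !=
                                  col (nth (x 0) [:: x 0; y r; y r1; y r2] b)
                                     (nth (x 0) [:: x 0; y r; y r1; y r2] c))) => /=.
  + by rewrite e0; case: (col _ _).
  + exact: alt.
  + by rewrite (hcol (y r2)) e2 (neqb alt); case: (col _ _).
  + by rewrite (hcol (y r2)) e2 e0; case: (col _ _).
Qed.

Theorem lemma3p9 (T : finType) (adj : rel T) (col : T -> T -> bool)
    (n m : nat) (x y : nat -> T) :
  (* G is a simple 2-edge-colored graph *)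
  irreflexive adj -> symmetric adj -> (forall u v, col u v = col v u) ->
  (* C1 = x_0 ... x_{2n-1} x_0 and C2 = y_0 ... y_{2m-1} y_0 are alternating
     cycles, Hamiltonian in G1 = G<V1>, G2 = G<V2> respectively *)
  is_alt_cycle adj col (2 * n) x ->
  is_alt_cycle adj col (2 * m) y ->
  let V1 := [set x (val i) | i : 'I_(2 * n)] in
  let V2 := [set y (val j) | j : 'I_(2 * m)] in
  (* G in G1 (+) G2 *)
  [disjoint V1 & V2] -> V1 :|: V2 = [set: T] ->
  (forall u w, u \in V1 -> w \in V2 -> adj u w) ->
  (* no good pair *)
  (forall i j, i < 2 * n -> j < 2 * m -> ~~ good_pair col (2 * n) x (2 * m) y i j) ->
  (* non-singular vertices on both sides *)
  (exists2 i, i < 2 * n & nonsingular col (x i) V2) ->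
  (exists2 j, j < 2 * m & nonsingular col (y j) V1) ->
  exists r s, [/\ r < 2 * m, s < 2 * n,
    is_alt_cycle adj col 4
      (fun k => nth (x 0) [:: x 0; y r; y (r.+1 %% (2 * m)); y (r.+2 %% (2 * m))] k) &
    is_alt_cycle adj col 4
      (fun k => nth (y 0) [:: y 0; x s; x (s.+1 %% (2 * n)); x (s.+2 %% (2 * n))] k)].
Proof.
move=> hirr hsym hcol hx hy V1 V2 disj cover hext hng ns1 ns2.
have [r [hr c1]] := half hsym hcol hx hy disj hext hng ns1 ns2.
have [s [hs c2]] : exists s, s < 2 * n /\
    is_alt_cycle adj col 4
      (fun k => nth (y 0) [:: y 0; x s; x (s.+1 %% (2 * n)); x (s.+2 %% (2 * n))] k).
  apply: (half hsym hcol hy hx) => //.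
  - by rewrite disjoint_sym.
  - by move=> u w hu hw; rewrite hsym; apply: hext.
  - move=> j i hj hi; have := hng i j hi hj.
    rewrite /good_pair [col (y j) (x i)]hcol.
    by rewrite [col (cnbr _ _ _ _ _) _]hcol.
by exists r, s; split.
Qed.
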